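(* Let $\alpha>-1$ and $W(x,y)=\dfrac{x^{\alpha}y^{\alpha+1}e^{-x-y}}{x+y}$ on $(0,\infty)^2$. Let $\{p_k\}$, $\{q_k\}$ be the monic Cauchy–Laguerre biorthogonal polynomials ($\deg p_k=\deg q_k=k$, monic, $\int_0^\infty\!\int_0^\infty p_k(x)q_l(y)W(x,y)\,dx\,dy=h_k\delta_{kl}$). Write $p_k(x)=\sum_{i=0}^k a_{k,i}x^i$ and $q_k(y)=\sum_{i=0}^k\hat a_{k,i}y^i$ with $a_{k,k}=\hat a_{k,k}=1$. Define $b_{\beta,0}=\hat b_{\beta,0}=1$ and, for $1\le i\le\beta$, $b_{\beta,i}=-\sum_{j=0}^{i-1}b_{\beta,j}a_{\beta-j,\beta-i}$ and $\hat b_{\beta,i}=-\sum_{j=0}^{i-1}\hat b_{\beta,j}\hat a_{\beta-j,\beta-i}$, with the convention $b_{\beta,i}=\hat b_{\beta,i}=0$ for $i<0$. Then for all $\beta,k,j\in\mathbb{N}$, $$\frac{1}{h_j}\int_0^\infty\!\!\int_0^\infty x^{\beta}p_k(x)q_j(y)W(x,y)\,dx\,dy=\sum_{\ell=0}^{k}a_{k,\ell}\,b_{\beta+\ell,\beta+\ell-j},$$ $$\frac{1}{h_j}\int_0^\infty\!\!\int_0^\infty y^{\beta}p_j(x)q_k(y)W(x,y)\,dx\,dy=\sum_{\ell=0}^{k}\hat a_{k,\ell}\,\hat b_{\beta+\ell,\beta+\ell-j}.$$ *)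

(* Defs.v *)
From HB Require Import structures.
From mathcomp Require Import all_boot all_order all_algebra.
From mathcomp Require Import all_classical all_reals all_analysis.
Set Implicit Arguments. Unset Strict Implicit. Unset Printing Implicit Defensive.
Import Order.TTheory GRing.Theory Num.Theory.
Import numFieldNormedType.Exports.
Local Open Scope classical_set_scope.
Local Open Scope ring_scope.

Definition CLweight (R : realType) (a : R) (x y : R) : R :=
  x `^ a * y `^ (a + 1) * expR (- x - y) / (x + y).

Definition leb2 (R : realType) :=
  ((@lebesgue_measure R) \x (@lebesgue_measure R))%E.

Definition CLint (R : realType) (a : R) (f : R -> R -> R) : R :=
  Rintegral (@leb2 R) (`]0, +oo[%classic `*` `]0, +oo[%classic)
    (fun z : R * R => f z.1 z.2 * CLweight a z.1 z.2).

Definition CL_biorthogonal (R : realType) (a : R) (p q : nat -> {poly R})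
  (h : nat -> R) : Prop :=
  [/\ forall k, p k \is monic /\ size (p k) = k.+1,
      forall k, q k \is monic /\ size (q k) = k.+1,
      forall k l, CLint a (fun x y => (p k).[x] * (q l).[y]) =
                  (if k == l then h k else 0)
    & forall k, h k != 0].

(* Given coefficients c k i (= a_{k,i}), the list [b_{beta,0}; ...; b_{beta,n}]
   b_{beta,0} = 1, b_{beta,i} = - sum_{j<i} b_{beta,j} c (beta-j) (beta-i). *)
Fixpoint bseq (R : nzRingType) (c : nat -> nat -> R) (beta n : nat) : seq R :=
  match n with
  | 0 => [:: 1]
  | n'.+1 => let s := bseq c beta n' in
      rcons s (- \sum_(j < n'.+1) s`_j * c (beta - j)%N (beta - n'.+1)%N)
  end.

Definition bcoef (R : nzRingType) (c : nat -> nat -> R) (beta : nat) (i : int) : R :=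
  match i with
  | Posz n => (bseq c beta n)`_n
  | Negz _ => 0
  end.

(* Main.v *)
Require Import Defs.
From HB Require Import structures.
From mathcomp Require Import all_boot all_order all_algebra.
From mathcomp Require Import all_classical all_reals all_analysis.
From mathcomp Require Import measurable_realfun.
From mathcomp Require Import ring lra zify.
Import Order.TTheory GRing.Theory Num.Theory.
Local Open Scope ring_scope.

Section Alg.
Variable R : realType.
Variable r : nat -> {poly R}.
Hypothesis Hr : forall m, r m \is monic /\ size (r m) = m.+1.

Let c := fun m i => (r m)`_i.

Lemma rlead m : (r m)`_m = 1.
Proof.
have [/monicP + sz] := Hr m.
by rewrite /lead_coef sz.
Qed.

Lemma rhigh m i : (m < i)%N -> (r m)`_i = 0.
Proof. by move=> mi; rewrite nth_default// (proj2 (Hr m)). Qed.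

Lemma bseq_size beta n : size (Defs.bseq c beta n) = n.+1.
Proof. by elim: n => [|n IH] //=; rewrite size_rcons IH. Qed.

Lemma bseq_nth beta n i : (i <= n)%N -> (Defs.bseq c beta n)`_i = (Defs.bseq c beta i)`_i.
Proof.
elim: n => [|n IH]; first by rewrite leqn0 => /eqP ->.
rewrite leq_eqVlt => /orP[/eqP -> //|]; rewrite ltnS => iN.
by rewrite /= nth_rcons bseq_size ltnS iN IH.
Qed.

Definition bb beta i := (Defs.bseq c beta i)`_i.

Lemma bb0 beta : bb beta 0 = 1.
Proof. by []. Qed.

Lemma bbS beta i : bb beta i.+1 = - \sum_(j < i.+1) bb beta j * c (beta - j)%N (beta - i.+1)%N.
Proof.
rewrite /bb /= nth_rcons bseq_size ltnn eqxx; congr (- _).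
by apply: eq_bigr => j _; rewrite bseq_nth// -ltnS.
Qed.

Lemma Ssum n k : (k <= n)%N ->
  \sum_(i < k.+1) bb n i * c (n - i)%N (n - k)%N = (k == 0%N)%:R.
Proof.
case: k => [|k] kn.
  by rewrite big_ord1 /= bb0 mul1r subn0 /c rlead.
rewrite big_ord_recr /= bbS /c rlead mulr1.
by rewrite addrC addNr.
Qed.

Lemma Xn_expand n : 'X^n = \sum_(i < n.+1) bb n i *: r (n - i)%N.
Proof.
apply/polyP => m; rewrite coefXn coef_sum.
under eq_bigr do rewrite coefZ.
have [mn|nm] := leqP m n; last first.
  rewrite big1; first by rewrite gtn_eqF.
  move=> i _; rewrite rhigh ?mulr0//.
  by apply: leq_ltn_trans nm; exact: leq_subr.
set k := (n - m)%N.
have mE : m = (n - k)%N by rewrite /k subKn.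
rewrite -(big_mkord xpredT (fun i => bb n i * (r (n - i)%N)`_m)).
rewrite (big_cat_nat _ (n := k.+1)) //=; last by rewrite ltnS leq_subr.
rewrite [X in _ + X]big1_seq ?addr0; last first.
  move=> i; rewrite mem_index_iota => /andP[ki iN].
  rewrite rhigh ?mulr0// /k; lia.
rewrite big_mkord mE Ssum ?leq_subr//.
have -> : ((n - k)%N == n) = (k == 0%N) by rewrite /k; apply/eqP/eqP; lia.
by [].
Qed.

Lemma bcoef_sub m j' : bcoef c m (m%:Z - j'%:Z) = if (j' <= m)%N then bb m (m - j') else 0.
Proof.
case: leqP => jm; first by rewrite subzn.
have -> : m%:Z - j'%:Z = Negz (j' - m).-1.
  rewrite NegzE prednK ?subn_gt0//; lia.
by [].
Qed.

Section F.
Variable F : {poly R} -> R.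
Hypothesis FD : forall P Q, F (P + Q) = F P + F Q.
Hypothesis FZ : forall (a : R) P, F (a *: P) = a * F P.
Variables (j : nat) (h : R).
Hypothesis Fr : forall m, F (r m) = if m == j then h else 0.

Lemma F0 : F 0 = 0.
Proof. by have := FZ 0 0; rewrite scale0r mul0r. Qed.

Lemma Fsum n (G : 'I_n -> {poly R}) : F (\sum_(i < n) G i) = \sum_(i < n) F (G i).
Proof.
elim: n G => [|n IH] G; first by rewrite !big_ord0 F0.
by rewrite !big_ord_recr FD IH.
Qed.

Lemma F_Xn n : F 'X^n = if (j <= n)%N then bb n (n - j) * h else 0.
Proof.
rewrite Xn_expand Fsum.
under eq_bigr do rewrite FZ Fr.
case: leqP => jn.
  have o : (n - j < n.+1)%N by rewrite ltnS leq_subr.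
  rewrite (bigD1 (Ordinal o)) //= subKn // eqxx big1 ?addr0 // => i ne.
  case: eqP => [E|]; last by rewrite mulr0.
  exfalso; move/eqP: ne; apply; apply: val_inj => /=.
  have := ltn_ord i; lia.
rewrite big1 // => i _; case: eqP => [E|]; last by rewrite mulr0.
exfalso; have := ltn_ord i; lia.
Qed.

Lemma F_main beta k : F ('X^beta * r k) = \sum_(l < k.+1) (r k)`_l *
   (if (j <= beta + l)%N then bb (beta + l) (beta + l - j) * h else 0).
Proof.
rewrite -{1}[r k]coefK poly_def (proj2 (Hr k)) mulr_sumr Fsum.
by apply: eq_bigr => l _; rewrite -scalerAr -exprD FZ F_Xn.
Qed.

Lemma F_final beta k : h != 0 ->
  h^-1 * F ('X^beta * r k) = \sum_(l < k.+1) (r k)`_l *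
     bcoef c (beta + l)%N ((beta + l)%:Z - j%:Z).
Proof.
move=> h0; rewrite F_main mulr_sumr; apply: eq_bigr => l _.
rewrite bcoef_sub; case: leqP => _; last by rewrite !mulr0.
by field.
Qed.
End F.
End Alg.

Local Open Scope classical_set_scope.
Import numFieldNormedType.Exports.

Section S.
Context {R : realType}.
Notation mu := (@lebesgue_measure R).

Lemma powR_cont (s x : R) : 0 < x -> {for x, continuous (@powR R ^~ s)}.
Proof.
move=> x0; apply: differentiable_continuous; apply/derivable1_diffP.
by apply: derivable_powR; rewrite in_itv/= andbT.
Qed.

Lemma FTC_pow (s e : R) : -1 < s -> 0 < e -> e < 1 ->
  (\int[mu]_(x in `[e, 1%R]) ((s + 1) * x `^ s)%:E)%E = (1%:E - (e `^ (s + 1))%:E)%E.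
Proof.
move=> s1 e0 e1.
have E1 : (1 : R) = 1 `^ (s + 1) by rewrite powR1.
rewrite [X in (X%:E - _)%E]E1.
apply: (@continuous_FTC2 _ (fun x => (s + 1) * x `^ s) (@powR R ^~ (s + 1))) => //.
- apply: continuous_in_subspaceT => x; rewrite inE/= in_itv/= => /andP[ex _].
  apply: (@continuousM _ R^o (fun=> s + 1) (@powR R ^~ s) x); first exact: cst_continuous.
  by apply: powR_cont; exact: lt_le_trans ex.
- split.
  + by move=> x; rewrite in_itv/= => /andP[ex _]; apply: derivable_powR; rewrite in_itv/= andbT (lt_trans e0 ex).
  + apply: cvg_at_right_filter; exact: powR_cont.
  + apply: cvg_at_left_filter; exact: powR_cont.
- move=> x; rewrite in_itv/= => /andP[ex _].
  by rewrite powR_derive1 ?addrK// in_itv/= andbT (lt_trans e0 ex).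
Qed.

Lemma int01 (s : R) : -1 < s -> mu.-integrable `]0, 1%R] (fun x => (x `^ s)%:E).
Proof.
move=> s1.
have s10 : 0 < s + 1 by rewrite -ltrBlDr sub0r.
pose F := fun n : nat => `[(n.+2%:R : R)^-1, 1%R]%classic.
have U : `]0, 1%R]%classic = \bigcup_n F n.
  apply/seteqP; split => x /=.
    rewrite in_itv/= => /andP[x0 x1].
    exists (Num.Def.trunc x^-1) => //=; rewrite /F/= in_itv/= x1 andbT.
    have xi : x = (x^-1)^-1 by rewrite invrK.
    rewrite [X in _ <= X]xi lef_pV2 ?posrE ?invr_gt0 ?ltr0n//.
    by apply: (le_trans (ltW (truncnS_gt _))); rewrite ler_nat.
  move=> [n _]; rewrite /F/= !in_itv/= => /andP[h1 ->]; rewrite andbT.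
  by apply: lt_le_trans h1; rewrite invr_gt0 ltr0n.
have mf : measurable_fun setT (fun x : R => ((s + 1) * x `^ s)%:E).
  apply/measurable_EFinP; apply: measurable_funM => //; exact: measurable_powR.
have f0 : forall x : R, (0 <= ((s + 1) * x `^ s)%:E)%E.
  by move=> x; rewrite lee_fin mulr_ge0 ?powR_ge0// ltW.
have key : (\int[mu]_(x in `]0%R, 1%R]) ((s + 1) * x `^ s)%:E <= 1)%E.
  rewrite U.
  have cv : ((\int[mu]_(x in F i) ((s + 1) * x `^ s)%:E)%E @[i --> \oo] -->
      (\int[mu]_(x in \bigcup_i F i) ((s + 1) * x `^ s)%:E)%E)%classic.
    apply: ge0_nondecreasing_set_cvg_integral.
    - move=> m n mn; rewrite subsetEset => x; rewrite /F/= !in_itv/= => /andP[h1 ->]; rewrite andbT.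
      apply: le_trans h1; rewrite lef_pV2 ?posrE ?ltr0n// ler_nat; exact: mn.
    - by move=> i; exact: measurable_itv.
    - by move=> i; exact: measurable_funTS.
    - by move=> i x _; exact: f0.
  rewrite -(cvg_lim _ cv) //.
  apply: lime_le; first by apply/cvg_ex; eexists; exact: cv.
  apply: nearW => n; rewrite /F FTC_pow ?invr_gt0 ?ltr0n ?invf_lt1 ?ltr1n//.
  by rewrite lee_fin lerBlDr lerDl powR_ge0.
have i1 : mu.-integrable `]0, 1%R] (fun x : R => ((s + 1) * x `^ s)%:E).
  apply/integrableP; split; first exact: measurable_funTS.
  under eq_integral do rewrite gee0_abs ?f0//.
  by apply: le_lt_trans key _; exact: ltey.
apply: (eq_integrable _ _ _ _ (integrableZl _ (s + 1)^-1 i1)) => //= x _.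
  by rewrite -EFinM mulrA mulVf ?mul1r// gt_eqF.
Qed.

Lemma powbound (K : nat) (x : R) : 0 <= x ->
  x ^+ K.+1 <= (2 ^+ K.+1 * K.+1`!%:R) * expR (x / 2).
Proof.
move=> x0.
have h := @expR_ge1Dxn R (x / 2) K (divr_ge0 x0 (ler0n _ 2)).
have h2 : (x / 2) ^+ K.+1 / K.+1`!%:R <= expR (x / 2).
  by apply: le_trans h; rewrite lerDr.
have f0 : 0 < K.+1`!%:R :> R by rewrite ltr0n fact_gt0.
rewrite ler_pdivrMr // in h2.
have e : x ^+ K.+1 = 2 ^+ K.+1 * (x / 2) ^+ K.+1.
  by rewrite -exprMn mulrC divfK// pnatr_eq0.
rewrite e -mulrA ler_wpM2l ?exprn_ge0//.
by rewrite [X in _ <= X]mulrC.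
Qed.

Lemma expbound (m : nat) (a x : R) : 1 < x ->
  x ^+ m * x `^ a * expR (- x) <=
  (2 ^+ (m + (Num.Def.trunc `|a|).+1)%N.+1 * (m + (Num.Def.trunc `|a|).+1)%N.+1`!%:R)
     * expR (- (x / 2)).
Proof.
move=> x1; set N := (Num.Def.trunc `|a|).+1; set K := (m + N)%N.
have x0 : 0 <= x by apply: ltW; apply: lt_trans x1.
have h1 : x `^ a <= x ^+ N.
  rewrite -powR_mulrn//; apply: ler_powR; first exact: ltW.
  by apply: le_trans (ltW (truncnS_gt _)); exact: ler_norm.
have h2 : x ^+ m * x `^ a <= x ^+ K.+1.
  apply: (@le_trans _ _ (x ^+ K)).
    by rewrite /K exprD; apply: ler_wpM2l => //; exact: exprn_ge0.
  rewrite exprSr; apply: ler_peMr; [exact: exprn_ge0|exact: ltW].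
apply: (@le_trans _ _ (x ^+ K.+1 * expR (- x))).
  by apply: ler_wpM2r => //; exact: expR_ge0.
apply: (@le_trans _ _ ((2 ^+ K.+1 * K.+1`!%:R) * expR (x / 2) * expR (- x))).
  by apply: ler_wpM2r; [exact: expR_ge0|exact: powbound].
rewrite -mulrA -expRD; apply: ler_wpM2l.
  by rewrite mulr_ge0 ?exprn_ge0// ler0n.
by rewrite le_eqVlt; apply/orP; left; apply/eqP; congr expR; field.
Qed.

Lemma mitv (i : interval R) : @measurable _ (measurableTypeR R) [set` i].
Proof. exact: measurable_itv. Qed.

Lemma int0y (a : R) (m : nat) : -1 < a ->
  mu.-integrable `]0%R, +oo[ (fun x => (x ^+ m * x `^ a * expR (- x))%:E).
Proof.
move=> a1.
set M := (2 ^+ (m + (Num.Def.trunc `|a|).+1)%N.+1 * (m + (Num.Def.trunc `|a|).+1)%N.+1`!%:R : R).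
have M0 : 0 <= M by rewrite mulr_ge0 ?exprn_ge0// ler0n.
have i1 : mu.-integrable setT (fun x => ((fun y => y `^ a) \_ `]0%R, 1%R] x)%:E).
  have := int01 a a1; rewrite (integrable_mkcond _ (mitv _)).
  by rewrite restrict_EFin.
have i2 : mu.-integrable setT (fun x => ((2 * M) * exponential_pdf (2^-1) x)%:E).
  apply: (eq_integrable _ _ _ _ (integrableZl _ (2 * M) (integrable_exponential_pdf _))) => //.
  all: try by move=> x _; rewrite EFinM.
  all: try by rewrite invr_gt0.
have i3 : mu.-integrable setT (fun x => ((fun y => y `^ a) \_ `]0%R, 1%R] x
     + (2 * M) * exponential_pdf (2^-1) x)%:E).
  by apply: (eq_integrable _ _ _ _ (integrableD _ i1 i2)) => //= x _; rewrite EFinD.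
apply: (le_integrable _ _ _ (integrableS _ _ _ i3)) => //.
- apply/measurable_EFinP; apply: measurable_funTS.
  apply: measurable_funM; first apply: measurable_funM.
  + exact: measurable_funX.
  + exact: measurable_powR.
  + by apply: measurableT_comp => //; exact: measurable_funN.
- move=> x; rewrite /= in_itv/= andbT => x0.
  have gx0 : 0 <= x ^+ m * x `^ a * expR (- x).
    by rewrite !mulr_ge0 ?exprn_ge0 ?powR_ge0 ?expR_ge0// ltW.
  have ex0 : 0 <= exponential_pdf (2^-1) x by apply: exponential_pdf_ge0; rewrite invr_ge0.
  rewrite lee_fin !ger0_norm//; last first.
    by rewrite addr_ge0 ?mulr_ge0// patchE; case: ifP => _ //; exact: powR_ge0.
  have [x1|x1] := leP x 1.
    rewrite patchE mem_set/=; last by rewrite in_itv/= x0 x1.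
    apply: ler_wpDr; first by rewrite mulr_ge0// mulr_ge0.
    apply: (@le_trans _ _ (1 * x `^ a * 1)); last by rewrite mul1r mulr1.
    have x0' : 0 <= x by exact: ltW.
    apply: ler_pM; rewrite ?mulr_ge0 ?exprn_ge0 ?powR_ge0 ?expR_ge0//.
    + apply: ler_wpM2r; first exact: powR_ge0.
      by apply: exprn_ile1 => //; exact: ltW.
    + by rewrite expR_le1 oppr_le0 ltW.
  rewrite patchE memNset/=; last by rewrite in_itv/= leNgt x1 andbF.
  rewrite add0r exponential_pdfE; last exact: ltW.
  apply: (le_trans (expbound m a x x1)); rewrite -/M.
  have E : - 2^-1 * x = - (x / 2) by rewrite mulNr mulrC.
  rewrite E le_eqVlt; apply/orP; left; apply/eqP; field.
  all: done.
Qed.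

Definition gf (a : R) (m : nat) (x : R) := x ^+ m * x `^ a * expR (- x).
Definition gt (a : R) (m : nat) := (gf a m) \_ `]0%R, +oo[.

Lemma gt_ge0 a m x : 0 <= gt a m x.
Proof.
rewrite /gt patchE; case: ifPn => // /set_mem/=; rewrite in_itv/= andbT => x0.
by rewrite /gf !mulr_ge0 ?exprn_ge0 ?powR_ge0 ?expR_ge0// ltW.
Qed.

Lemma gt_pos a m x : 0 < x -> gt a m x = gf a m x.
Proof. by move=> x0; rewrite /gt patchE mem_set//= in_itv/= andbT. Qed.

Lemma gt_neg a m x : x <= 0 -> gt a m x = 0.
Proof. by move=> x0; rewrite /gt patchE memNset//= in_itv/= andbT ltNge x0. Qed.

Lemma gt_int a m : -1 < a -> mu.-integrable setT (fun x => (gt a m x)%:E).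
Proof.
move=> a1; have := int0y a m a1; rewrite (integrable_mkcond _ (mitv _)).
by rewrite restrict_EFin.
Qed.

Lemma gt_meas a m : -1 < a -> measurable_fun (setT : set (measurableTypeR R)) (gt a m).
Proof.
by move=> a1; apply/measurable_EFinP; exact: (measurable_int _ (gt_int a m a1)).
Qed.

Lemma gt_fin a m : -1 < a -> (\int[mu]_x (gt a m x)%:E < +oo)%E.
Proof.
move=> a1; have /integrableP[_] := gt_int a m a1.
by under eq_integral do rewrite gee0_abs ?lee_fin ?gt_ge0//.
Qed.

Local Notation RR := (measurableTypeR R * measurableTypeR R)%type.
Definition DD : set RR := `]0%R, +oo[%classic `*` `]0%R, +oo[%classic.

Lemma mDD : measurable DD.
Proof. exact: measurableX (mitv _) (mitv _). Qed.

Lemma prod_int (a : R) (i j : nat) : -1 < a ->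
  (@leb2 R).-integrable DD (fun z => (gf a i z.1 * gf a j z.2)%:E).
Proof.
move=> a1.
rewrite (integrable_mkcond _ mDD).
have mf : measurable_fun setT (fun z : RR => (gt a i z.1 * gt a j z.2)%:E).
  apply/measurable_EFinP; apply: measurable_funM.
  - exact: measurableT_comp (gt_meas a i a1) measurable_fst.
  - exact: measurableT_comp (gt_meas a j a1) measurable_snd.
apply: (eq_integrable _ (fun z : RR => (gt a i z.1 * gt a j z.2)%:E)) => //.
  move=> [x y] _; rewrite patchE /=.
  have [x0|x0] := ltP 0 x; have [y0|y0] := ltP 0 y.
  - by rewrite mem_set ?gt_pos// /DD/= !in_itv/= !andbT.
  - rewrite memNset; last by rewrite /DD/= => -[_]; rewrite in_itv/= andbT ltNge y0.
    rewrite (gt_neg _ _ _ y0) mulr0. done.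
  - rewrite memNset ?(gt_neg _ _ _ x0) ?mul0r// /DD/= => -[]; rewrite in_itv/= andbT.
    by rewrite ltNge x0.
  - rewrite memNset ?(gt_neg _ _ _ x0) ?mul0r// /DD/= => -[]; rewrite in_itv/= andbT.
    by rewrite ltNge x0.
apply/integrableP; split => //.
under eq_integral do rewrite gee0_abs ?lee_fin ?mulr_ge0 ?gt_ge0//.
rewrite fubini_tonelli1//; last by move=> z; rewrite lee_fin mulr_ge0 ?gt_ge0.
rewrite /fubini_F /=.
have inner : forall x, (\int[mu]_y (gt a i x * gt a j y)%:E =
    (gt a i x)%:E * \int[mu]_y (gt a j y)%:E)%E.
  move=> x; under eq_integral do rewrite EFinM.
  apply: ge0_integralZl => //.
  - by apply/measurable_EFinP; exact: gt_meas.
  - by move=> y _; rewrite lee_fin gt_ge0.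
  - by rewrite lee_fin gt_ge0.
under eq_integral do rewrite inner.
rewrite ge0_integralZr//.
- apply: lte_mul_pinfty.
  + by apply: integral_ge0 => x _; rewrite lee_fin gt_ge0.
  + rewrite ge0_fin_numE; first exact: gt_fin.
    by apply: integral_ge0 => x _; rewrite lee_fin gt_ge0.
  + exact: gt_fin.
- by apply/measurable_EFinP; exact: gt_meas.
- by move=> x _; rewrite lee_fin gt_ge0.
- by apply: integral_ge0 => x _; rewrite lee_fin gt_ge0.
Qed.

Lemma mono_int (a : R) (i j : nat) : -1 < a ->
  (@leb2 R).-integrable DD (fun z : RR => (z.1 ^+ i * z.2 ^+ j * CLweight a z.1 z.2)%:E).
Proof.
move=> a1.
have mfst : measurable_fun (setT : set RR) fst := measurable_fst.
have msnd : measurable_fun (setT : set RR) snd := measurable_snd.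
have mfst' : @measurable_fun _ _ RR R setT (fun z : RR => (z.1 : R)) by exact: measurable_fst.
have msnd' : @measurable_fun _ _ RR R setT (fun z : RR => (z.2 : R)) by exact: measurable_snd.
apply: (le_integrable mDD _ _ (prod_int a i j a1)).
- apply/measurable_EFinP.
  apply: (eq_measurable_fun (fun z : RR => z.1 ^+ i * z.2 ^+ j * (z.1 `^ a * z.2 `^ (a + 1) *
      expR (- z.1 - z.2) * (z.1 + z.2) `^ (-1)))).
    move=> [x y]; rewrite inE /DD/= !in_itv/= !andbT => -[x0 y0].
    by rewrite /CLweight powR_inv1// addr_ge0// ltW.
  apply: measurable_funTS.
  apply: measurable_funM; first apply: measurable_funM.
  + exact: measurable_funX.
  + exact: measurable_funX.
  apply: measurable_funM; first apply: measurable_funM; first apply: measurable_funM.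
  + exact: measurableT_comp (measurable_powR _) mfst.
  + exact: measurableT_comp (measurable_powR _) msnd.
  + apply: measurableT_comp => //; apply: measurable_funB => //.
    exact: measurable_funN.
  + apply: measurableT_comp (measurable_powR _) _.
    exact: measurable_funD.
- move=> [x y]; rewrite /DD/= !in_itv/= !andbT => -[x0 y0].
  rewrite lee_fin.
  have E : x ^+ i * y ^+ j * CLweight a x y = gf a i x * gf a j y * (y / (x + y)).
    rewrite /CLweight /gf powRD; last by apply/implyP => _; rewrite gt_eqF.
    rewrite powRr1 ?ltW// expRD; field.
    by rewrite gt_eqF// addr_gt0.
  have g0 : 0 <= gf a i x * gf a j y.
    by rewrite /gf !mulr_ge0 ?exprn_ge0 ?powR_ge0 ?expR_ge0// ltW.
  rewrite E [X in _ <= X]ger0_norm// ger0_norm; last first.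
    by rewrite mulr_ge0// divr_ge0 ?ltW// addr_gt0.
  apply: ler_piMr => //.
  by rewrite ler_pdivrMr ?addr_gt0// mul1r lerDr ltW.
Qed.

Lemma CLintE (a : R) (f : R -> R -> R) :
  CLint a f = Rintegral (@leb2 R) DD (fun z : RR => f z.1 z.2 * CLweight a z.1 z.2).
Proof. by []. Qed.

Lemma int_sumI n (G : 'I_n -> RR -> R) :
  (forall i, (@leb2 R).-integrable DD (EFin \o G i)) ->
  (@leb2 R).-integrable DD (fun z => (\sum_(i < n) G i z)%:E).
Proof.
move=> H.
apply: (eq_integrable mDD (fun z => \sum_(i < n) (G i z)%:E)).
  by move=> z _; rewrite sumEFin.
by apply: (integrable_sum mDD) => i _; exact: H.
Qed.

Lemma poly_int (a : R) (P Q : {poly R}) : -1 < a ->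
  (@leb2 R).-integrable DD (fun z : RR => (P.[z.1] * Q.[z.2] * CLweight a z.1 z.2)%:E).
Proof.
move=> a1.
apply: (eq_integrable mDD (fun z : RR => (\sum_(i < size P) \sum_(j < size Q)
   (P`_i * Q`_j) * (z.1 ^+ i * z.2 ^+ j * CLweight a z.1 z.2))%:E)).
  move=> z _; congr EFin; rewrite !horner_coef mulr_suml mulr_suml.
  apply: eq_bigr => i _; rewrite mulr_sumr mulr_suml; apply: eq_bigr => j _.
  ring.
apply: int_sumI => i; apply: int_sumI => j.
apply: (eq_integrable mDD _ _ _ (integrableZl mDD (P`_i * Q`_j) (mono_int a i j a1))).
by move=> z _; rewrite /= EFinM.
Qed.

Lemma B_D1 (a : R) (P1 P2 Q : {poly R}) : -1 < a ->
  CLint a (fun x y => (P1 + P2).[x] * Q.[y]) =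
  CLint a (fun x y => P1.[x] * Q.[y]) + CLint a (fun x y => P2.[x] * Q.[y]).
Proof.
move=> a1; rewrite !CLintE -(RintegralD mDD (poly_int a P1 Q a1) (poly_int a P2 Q a1)).
by apply: eq_Rintegral => z _; rewrite hornerD !mulrDl.
Qed.

Lemma B_Z1 (a : R) (c : R) (P Q : {poly R}) : -1 < a ->
  CLint a (fun x y => (c *: P).[x] * Q.[y]) = c * CLint a (fun x y => P.[x] * Q.[y]).
Proof.
move=> a1; rewrite !CLintE -(RintegralZl c mDD (poly_int a P Q a1)).
by apply: eq_Rintegral => z _; rewrite hornerZ !mulrA.
Qed.

Lemma B_D2 (a : R) (P Q1 Q2 : {poly R}) : -1 < a ->
  CLint a (fun x y => P.[x] * (Q1 + Q2).[y]) =
  CLint a (fun x y => P.[x] * Q1.[y]) + CLint a (fun x y => P.[x] * Q2.[y]).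
Proof.
move=> a1; rewrite !CLintE -(RintegralD mDD (poly_int a P Q1 a1) (poly_int a P Q2 a1)).
by apply: eq_Rintegral => z _; rewrite hornerD mulrDr mulrDl.
Qed.

Lemma B_Z2 (a : R) (c : R) (P Q : {poly R}) : -1 < a ->
  CLint a (fun x y => P.[x] * (c *: Q).[y]) = c * CLint a (fun x y => P.[x] * Q.[y]).
Proof.
move=> a1; rewrite !CLintE -(RintegralZl c mDD (poly_int a P Q a1)).
by apply: eq_Rintegral => z _; rewrite hornerZ; ring.
Qed.
End S.

Local Close Scope classical_set_scope.

Theorem corollary1 (R : realType) (a : R) (ha : -1 < a)
  (p q : nat -> {poly R}) (h : nat -> R)
  (Hbio : CL_biorthogonal a p q h) :
  forall beta k j : nat,
    (h j)^-1 * CLint a (fun x y => x ^+ beta * (p k).[x] * (q j).[y]) =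
      \sum_(l < k.+1) (p k)`_l *
        bcoef (fun m i => (p m)`_i) (beta + l)%N ((beta + l)%:Z - j%:Z)
  /\
    (h j)^-1 * CLint a (fun x y => y ^+ beta * (p j).[x] * (q k).[y]) =
      \sum_(l < k.+1) (q k)`_l *
        bcoef (fun m i => (q m)`_i) (beta + l)%N ((beta + l)%:Z - j%:Z).
Proof.
case: Hbio => Hp Hq Horth Hh.
move=> beta k j; split.
- pose F := fun P : {poly R} => CLint a (fun x y => P.[x] * (q j).[y]).
  have -> : CLint a (fun x y => x ^+ beta * (p k).[x] * (q j).[y]) = F ('X^beta * p k).
    rewrite /F; congr CLint; apply: funext => x; apply: funext => y.
    by rewrite hornerM hornerXn.
  apply: (@F_final R p Hp F _ _ j (h j)) => //.
  + by move=> P Q; exact: (B_D1 a P Q (q j) ha).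
  + by move=> c P; exact: (B_Z1 a c P (q j) ha).
  + by move=> m; rewrite /F Horth; case: eqP => // ->.
- pose G := fun Q : {poly R} => CLint a (fun x y => (p j).[x] * Q.[y]).
  have -> : CLint a (fun x y => y ^+ beta * (p j).[x] * (q k).[y]) = G ('X^beta * q k).
    rewrite /G; congr CLint; apply: funext => x; apply: funext => y.
    by rewrite hornerM hornerXn mulrCA mulrA.
  apply: (@F_final R q Hq G _ _ j (h j)) => //.
  + by move=> P Q; exact: (B_D2 a (p j) P Q ha).
  + by move=> c P; exact: (B_Z2 a c (p j) P ha).
  + by move=> m; rewrite /G Horth eq_sym.
Qed.
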